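(* With $\mathbb{K}$, $I$, $\mathcal G=(g_0,\dots,g_s)$, $n_i=\deg_y(g_i)$ and $A_0,A_1,\dots$ as in the context, for every integer $n\ge n_s$ the $\mathbb{K}[x]$-module $I_{\le(.,n)}=\{f\in I:\deg_y(f)\le n\}$ is free of rank $n-n_s+1$, with basis $A_{n_s},A_{n_s+1},\dots,A_n$.
   Context: Let $\mathbb{K}$ be a field and $I\subseteq\mathbb{K}[x,y]$ an ideal. Let $\mathcal G=(g_0,\dots,g_s)$ be the reduced minimal Gröbner basis of $I$ for the lexicographic order with $x\prec y$, listed in decreasing order, and $n_i=\deg_y(g_i)$ (so $n_0> n_1>\cdots> n_s$). Define polynomials $A_0,A_1,\dots$ recursively: for $0\le i<n_s$, $A_i=0$; if there is $k\in\{0,\dots,s\}$ with $n_k=i$, then $A_i=g_k$; otherwise ($i>n_s$ and $i\notin\{n_0,\dots,n_s\}$), $A_i$ is obtained from $yA_{i-1}$ by keeping its part of $y$-degree $\ge i$ unchanged and replacing its part of $y$-degree $<i$ by the normal form of that part modulo $\mathcal G$. For a subset $S\subseteq\mathbb{K}[x,y]$, $S_{\le(.,n)}$ denotes the elements of $S$ of $y$-degree at most $n$. *)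

(* Defs.v *)
(* K[x,y] is represented as {poly {poly K}}:
   the outer variable 'X is y, the coefficients are in K[x].
   A monomial x^i y^j is encoded as the pair (i, j). *)
From HB Require Import structures.
From mathcomp Require Import all_boot all_order all_algebra.
From Stdlib Require Import ClassicalEpsilon.
Set Implicit Arguments. Unset Strict Implicit. Unset Printing Implicit Defensive.
Import GRing.Theory.
Local Open Scope ring_scope.

Section Bivariate.
Variable K : fieldType.
Local Notation P2 := {poly {poly K}}.

(* y-degree (deg_y 0 = 0 by convention; only used on nonzero polys). *)
Definition degy (f : P2) : nat := (size f).-1.

(* leading monomial (x-exponent, y-exponent) for lex with x < y:
   largest y-degree first, then largest x-degree. *)
Definition LM (f : P2) : nat * nat := ((size (lead_coef f)).-1, (size f).-1).
Definition LC (f : P2) : K := lead_coef (lead_coef f).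

Definition mdiv (m1 m2 : nat * nat) : bool := (m1.1 <= m2.1)%N && (m1.2 <= m2.2)%N.
Definition mlt (m1 m2 : nat * nat) : bool :=
  (m1.2 < m2.2)%N || ((m1.2 == m2.2) && (m1.1 < m2.1)%N).

Definition in_supp (f : P2) (m : nat * nat) : bool := (f`_m.2)`_m.1 != 0.

Definition is_ideal (I : P2 -> Prop) : Prop :=
  [/\ I 0, (forall f g, I f -> I g -> I (f + g)) & (forall c f, I f -> I (c * f))].

Definition ideal_gen (G : seq P2) (f : P2) : Prop :=
  exists c : seq P2, f = \sum_(k < size G) c`_k * G`_k.

Definition groebner (I : P2 -> Prop) (G : seq P2) : Prop :=
  (forall g, g \in G -> g != 0 /\ I g) /\
  (forall f, I f -> f != 0 -> exists2 g, g \in G & mdiv (LM g) (LM f)).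

Definition minimalGB (G : seq P2) : Prop :=
  (forall g, g \in G -> LC g = 1) /\
  (forall k k', (k < size G)%N -> (k' < size G)%N -> k != k' ->
     ~~ mdiv (LM G`_k') (LM G`_k)).

Definition reducedGB (G : seq P2) : Prop :=
  (forall g, g \in G -> LC g = 1) /\
  (forall k k', (k < size G)%N -> (k' < size G)%N -> k != k' ->
     forall m, in_supp G`_k m -> ~~ mdiv (LM G`_k') m).

Definition decreasingGB (G : seq P2) : Prop :=
  sorted (fun g h => mlt (LM h) (LM g)) G.

(* r is a normal form of p modulo G: p - r in <G> and no monomial of r
   is divisible by a leading monomial of G (unique when G is a GB). *)
Definition is_nf (G : seq P2) (p r : P2) : Prop :=
  ideal_gen G (p - r) /\
  (forall m, in_supp r m -> forall g, g \in G -> ~~ mdiv (LM g) m).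

Definition NF (G : seq P2) (p : P2) : P2 :=
  epsilon (inhabits p) (fun r => is_nf G p r).

Definition ns (G : seq P2) : nat := degy (last 0 G).

Definition Astep (G : seq P2) (i : nat) (prev : P2) : P2 :=
  if (i < ns G)%N then 0
  else if has (fun g => degy g == i) G then nth 0 G (find (fun g => degy g == i) G)
  else let q := 'X * prev in (q - take_poly i q) + NF G (take_poly i q).

Fixpoint Aseq (G : seq P2) (i : nat) : P2 :=
  match i with
  | 0 => Astep G 0 0
  | i'.+1 => Astep G i'.+1 (Aseq G i')
  end.

End Bivariate.

(* Main.v *)
Require Import Defs.
From HB Require Import structures.
From mathcomp Require Import all_boot all_order all_algebra.
From mathcomp Require Import zify ring.
From Stdlib Require Import ClassicalEpsilon.
Import GRing.Theory.
Local Open Scope ring_scope.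
Set Implicit Arguments. Unset Strict Implicit. Unset Printing Implicit Defensive.

Lemma size_eqS (R : nzRingType) (p : {poly R}) n :
  p`_n != 0 -> (forall k, (n < k)%N -> p`_k = 0) -> size p = n.+1.
Proof.
move=> nz hk; apply/eqP; rewrite eqn_leq; apply/andP; split.
  by apply/leq_sizeP => k; exact: hk.
rewrite ltnNge; apply/negP => hs; move: nz; by rewrite nth_default ?eqxx.
Qed.

Section Proof.
Variable K : fieldType.
Local Notation P2 := {poly {poly K}}.
Variable G : seq P2.

Lemma ideal_genP f : ideal_gen G f <-> exists c : nat -> P2, f = \sum_(k < size G) c k * G`_k.
Proof.
split=> [[c ->]|[c ->]]; first by exists (fun k => c`_k).
exists (mkseq c (size G)); apply: eq_bigr => k _; by rewrite nth_mkseq.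
Qed.

Lemma ideal_gen0 : ideal_gen G 0.
Proof. apply/ideal_genP; exists (fun _ => 0); by rewrite big1 // => k _; rewrite mul0r. Qed.

Lemma ideal_genD f g : ideal_gen G f -> ideal_gen G g -> ideal_gen G (f + g).
Proof.
move=> /ideal_genP[c ->] /ideal_genP[d ->]; apply/ideal_genP.
exists (fun k => c k + d k); rewrite -big_split; apply: eq_bigr => k _; by rewrite mulrDl.
Qed.

Lemma ideal_genM h f : ideal_gen G f -> ideal_gen G (h * f).
Proof.
move=> /ideal_genP[c ->]; apply/ideal_genP.
exists (fun k => h * c k); rewrite mulr_sumr; apply: eq_bigr => k _; by rewrite mulrA.
Qed.

Lemma ideal_genB f g : ideal_gen G f -> ideal_gen G g -> ideal_gen G (f - g).
Proof. by move=> Hf Hg; apply: ideal_genD => //; rewrite -mulN1r; apply: ideal_genM. Qed.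

Lemma ideal_gen_mem g : g \in G -> ideal_gen G g.
Proof.
move=> gG; apply/ideal_genP; exists (fun k => (k == index g G)%:R).
have hi : (index g G < size G)%N by rewrite index_mem.
rewrite (bigD1 (Ordinal hi)) //= eqxx mul1r nth_index // big1 ?addr0 // => k.
by rewrite -val_eqE /= => /negbTE ->; rewrite mul0r.
Qed.

Definition red (r : P2) := forall m, in_supp r m -> forall g : P2, g \in G -> ~~ mdiv (LM g) m.

Lemma in_supp_LM (f : P2) : f != 0 -> in_supp f (LM f).
Proof.
move=> nz; rewrite /in_supp /LM /=.
have : lead_coef (lead_coef f) != 0 by rewrite !lead_coef_eq0.
by [].
Qed.

Variable I : P2 -> Prop.
Hypothesis HI : is_ideal I.
Hypothesis HG : groebner I G.

Lemma ideal_gen_sub f : ideal_gen G f -> I f.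
Proof.
case: HI => I0 ID IM; move=> /ideal_genP[c ->].
apply: (big_ind I) => // k _; apply: IM; apply HG; exact: mem_nth.
Qed.

Lemma nf_unique (p r1 r2 : P2) : ideal_gen G (p - r1) -> red r1 ->
  ideal_gen G (p - r2) -> red r2 -> r1 = r2.
Proof.
move=> h1 R1 h2 R2; apply/eqP; rewrite -subr_eq0; apply/negPn/negP => nz.
have Hi : I (r1 - r2).
  apply: ideal_gen_sub.
  have -> : r1 - r2 = (p - r2) - (p - r1) by ring.
  exact: ideal_genB.
case: HG => _ /(_ _ Hi nz) [g gG dv].
have := in_supp_LM nz; set m := LM (r1 - r2).
case: (boolP (in_supp r1 m)) => [s1|]; first by move: (R1 _ s1 _ gG); rewrite dv.
case: (boolP (in_supp r2 m)) => [s2|]; first by move: (R2 _ s2 _ gG); rewrite dv.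
rewrite /in_supp !negbK coefB coefB => /eqP -> /eqP ->; by rewrite subr0 eqxx.
Qed.

Hypothesis Hmin : minimalGB G.

Lemma nf_exists j : forall p : P2, (size p <= j)%N ->
  exists r : P2, (size r <= j)%N /\ ideal_gen G (p - r) /\ red r.
Proof.
elim: j => [|j IH] p.
  rewrite leqn0 size_poly_eq0 => /eqP ->; exists 0; split; first by rewrite size_poly0.
  split; first by rewrite subr0; exact: ideal_gen0.
  by move=> m; rewrite /in_supp !coef0 eqxx.
suff D : forall i (p : P2), (size p <= j.+1)%N -> (size (p`_j)%R <= i)%N ->
  exists r : P2, (size r <= j.+1)%N /\ ideal_gen G (p - r) /\ red r.
  move=> hp; exact: (D _ p hp (leqnn _)).
elim=> [|i IHi] {}p hp hi.
  have : (size p <= j)%N.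
    apply/leq_sizeP => k; rewrite leq_eqVlt => /orP[/eqP <-|hk].
      by apply/eqP; rewrite -size_poly_eq0 -leqn0.
    by move/leq_sizeP: hp; apply.
  move/IH=> [r [sr rest]]; exists r; split => //; exact: leqW.
case: (leqP (size p`_j) i) => hi'; first exact: IHi.
have si : size p`_j = i.+1 by apply/anti_leq; rewrite hi hi'.
set c := (p`_j)`_i.
case: (boolP (has (fun g : P2 => mdiv (LM g) (i, j)) G)) => [/hasP[g gG dv]|nd].
  have [gnz Ig] := (proj1 HG) g gG.
  have lcg : lead_coef (lead_coef g) = 1 by apply: (proj1 Hmin).
  set a := (size (lead_coef g)).-1.
  set e := (size g).-1.
  move: dv; rewrite /mdiv /LM /= -/a -/e => /andP[ha he].
  have sg : size g = e.+1 by rewrite /e prednK // size_poly_gt0.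
  have lgnz : lead_coef g != 0 by rewrite lead_coef_eq0.
  have slg : size (lead_coef g) = a.+1 by rewrite /a prednK // size_poly_gt0.
  set h := (c *: 'X^(i - a))%:P * ('X^(j - e) * g).
  have coefh k : h`_k = (c *: 'X^(i-a)) * (if (k < j - e)%N then 0 else g`_(k - (j - e))).
    by rewrite /h coefCM coefXnM.
  have [r [sr [ir rr]]] : exists r : P2, (size r <= j.+1)%N /\ ideal_gen G ((p - h) - r) /\ red r.
    apply: IHi.
      apply/leq_sizeP => k hk; rewrite coefB coefh.
      have -> : (k < j - e)%N = false by apply/negbTE; rewrite -leqNgt; lia.
      rewrite [p`_k]nth_default; last by apply: leq_trans hp _; lia.
      by rewrite nth_default ?mulr0 ?subr0 // sg; lia.
    apply/leq_sizeP => k hk; rewrite coefB coefh.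
    have -> : (j < j - e)%N = false by apply/negbTE; rewrite -leqNgt; lia.
    have -> : (j - (j - e))%N = e by lia.
    rewrite -/(lead_coef g) -scalerAl coefB coefZ coefXnM.
    have -> : (k < i - a)%N = false by apply/negbTE; rewrite -leqNgt; lia.
    move: hk; rewrite leq_eqVlt => /orP[/eqP <-|hk].
      have -> : (i - (i - a))%N = a by lia.
      have la : (lead_coef g)`_a = 1 by rewrite -lcg [RHS]/lead_coef slg.
      by rewrite la mulr1 subrr.
    rewrite [p`_j`_k]nth_default ?si // [(lead_coef g)`_ _]nth_default ?mulr0 ?subr0 // slg; lia.
  exists r; split => //; split => //.
  have -> : p - r = (p - h - r) + h by ring.
  apply: ideal_genD => //.
  rewrite /h mulrA; apply: ideal_genM; exact: ideal_gen_mem.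
set m := (c *: 'X^i)%:P * 'X^j : P2.
have coefm k : m`_k = (c *: 'X^i) * (k == j)%:R by rewrite /m coefCM coefXn.
have [r [sr [ir rr]]] : exists r : P2, (size r <= j.+1)%N /\ ideal_gen G ((p - m) - r) /\ red r.
  apply: IHi.
    apply/leq_sizeP => k hk; rewrite coefB coefm.
    have -> : (k == j) = false by apply/negbTE; lia.
    by rewrite mulr0 subr0 nth_default //; apply: leq_trans hp _.
  apply/leq_sizeP => k hk; rewrite coefB coefm eqxx mulr1 coefB coefZ coefXn.
  move: hk; rewrite leq_eqVlt => /orP[/eqP <-|hk].
    by rewrite eqxx mulr1 subrr.
  have -> : (k == i) = false by apply/negbTE; lia.
  by rewrite mulr0 subr0 nth_default // si.
exists (r + m); split.
  apply/leq_sizeP => k hk; rewrite coefD coefm.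
  have -> : (k == j) = false by apply/negbTE; lia.
  by rewrite mulr0 addr0 nth_default //; apply: leq_trans sr _.
split; first by have -> : p - (r + m) = p - m - r by ring.
move=> [u v]; rewrite /in_supp /= coefD coefD => hs g gG.
case: (eqVneq ((m`_v)`_u) 0) => [e0|ne0].
  by apply: rr => //; move: hs; rewrite e0 addr0.
move: ne0; rewrite coefm; case: (eqVneq v j) => [->|]; last by rewrite mulr0 coef0 eqxx.
rewrite mulr1 coefZ coefXn; case: (eqVneq u i) => [->|]; last by rewrite mulr0 eqxx.
by move=> _; move/hasPn: nd; apply.
Qed.

Hypothesis Hdec : decreasingGB G.
Hypothesis G0 : G != [::].

Lemma mlt_trans : transitive (fun g h : P2 => mlt (LM h) (LM g)).
Proof. move=> b a c; rewrite /mlt; lia. Qed.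

Lemma last_le_aux (s : seq P2) : sorted (fun g h : P2 => mlt (LM h) (LM g)) s ->
  forall g, g \in s -> (degy (last (0%R:P2) s) <= degy g)%N.
Proof.
elim: s => [//|x s IH] /= Hs g.
have Hall := order_path_min mlt_trans Hs.
have Hs' := path_sorted Hs.
case: s IH Hs Hall Hs' => [|y s] IH _ Hall Hs'.
  by rewrite inE => /eqP ->.
have hl : last y s \in y :: s := mem_last y s.
rewrite inE => /orP[/eqP ->|gs].
  by have := allP Hall _ hl; rewrite /mlt /degy /LM /=; lia.
exact: (IH Hs' g gs).
Qed.

Lemma ns_le (g : P2) : g \in G -> (ns G <= degy g)%N.
Proof. exact: last_le_aux. Qed.

Lemma has_ns : has (fun g : P2 => degy g == ns G) G.
Proof.
apply/hasP; exists (last 0 G) => //.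
by case: G G0 => // x s _; rewrite /= mem_last.
Qed.

Definition inv (d : nat) (a : P2) :=
  [/\ I a, size a = d.+1 &
   forall g : P2, g \in G -> (degy g <= d)%N -> (size (lead_coef a) <= size (lead_coef g))%N].

Lemma Astep_has d prev : (ns G <= d)%N -> has (fun g : P2 => degy g == d) G ->
  inv d (Astep G d prev).
Proof.
move=> hd Hh; rewrite /Astep.
have -> : (d < ns G)%N = false by rewrite ltnNge hd.
rewrite Hh.
set P := (fun g : P2 => degy g == d).
have hk : (find P G < size G)%N by rewrite -has_find.
set g0 := nth 0 G (find P G).
have g0G : g0 \in G by exact: mem_nth.
have /eqP dg0 : P g0 by exact: nth_find.
have [g0nz Ig0] := (proj1 HG) g0 g0G.
have sg0 : size g0 = d.+1 by rewrite -dg0 /degy prednK // size_poly_gt0.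
split => // g gG dg.
case: (leqP (size (lead_coef g0)) (size (lead_coef g))) => // lt; exfalso.
have hk' : (index g G < size G)%N by rewrite index_mem.
have neq : find P G != index g G.
  apply/eqP => e; move: lt; by rewrite /g0 e nth_index // ltnn.
have := (proj2 Hmin) _ _ hk hk' neq.
rewrite nth_index // -/g0 /mdiv /LM /=.
move: dg lt; rewrite /degy sg0 /=; clearbody g0; lia.
Qed.

Lemma Astep_nohas d prev : (ns G <= d)%N -> ~~ has (fun g : P2 => degy g == d.+1) G ->
  inv d prev -> inv d.+1 (Astep G d.+1 prev).
Proof.
move=> hd Hnh [Ip sp mp]; rewrite /Astep.
have -> : (d.+1 < ns G)%N = false by rewrite ltnNge (leqW hd).
rewrite (negbTE Hnh) /=.
set q := 'X * prev; set t := take_poly d.+1 q.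
have st : (size t <= d.+1)%N by exact: size_take_poly.
have [r0 [sr0 [ir0 rr0]]] := nf_exists st.
have Hnf : is_nf G t (NF G t) by apply: epsilon_spec; exists r0.
have -> : NF G t = r0 by case: Hnf => h1 h2; exact: (nf_unique h1 h2 ir0 rr0).
case: HI => I0 ID IM.
have lp : lead_coef prev != 0 by rewrite lead_coef_eq0 -size_poly_gt0 sp.
have coefq k : q`_k = if k == 0%N then 0 else prev`_k.-1 by rewrite /q coefXM.
have sA : size (q - t + r0) = d.+2.
  apply: size_eqS.
    rewrite coefD coefB coefq /= [t`_ _]nth_default // [r0`_ _]nth_default //.
    by rewrite subr0 addr0 -[d]/(d.+1.-1) -sp.
  move=> k hk; rewrite coefD coefB coefq.
  have -> : (k == 0%N) = false by apply/negbTE; lia.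
  rewrite [t`_ _]nth_default; last by apply: leq_trans st _; lia.
  rewrite [r0`_ _]nth_default; last by apply: leq_trans sr0 _; lia.
  by rewrite nth_default ?subr0 ?addr0 // sp; lia.
have lA : lead_coef (q - t + r0) = lead_coef prev.
  rewrite /lead_coef sA sp /= coefD coefB coefq /= [t`_ _]nth_default //.
  by rewrite [r0`_ _]nth_default // subr0 addr0.
split => //.
  have -> : q - t + r0 = q + (-1) * (t - r0) by ring.
  apply: ID; first exact: IM.
  apply: IM; exact: ideal_gen_sub.
move=> g gG dg; rewrite lA; apply: mp => //.
move/hasPn: Hnh => /(_ g gG) /=; lia.
Qed.

Lemma invA d : (ns G <= d)%N -> inv d (Aseq G d).
Proof.
elim: d => [|d IH] hd.
  apply: Astep_has => //; move: hd; rewrite leqn0 => /eqP <-; exact: has_ns.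
rewrite /=.
case: (boolP (has (fun g : P2 => degy g == d.+1) G)) => Hh; first exact: Astep_has.
have hd' : (ns G <= d)%N.
  move: hd; rewrite leq_eqVlt => /orP[/eqP e|] //.
  by move: Hh; rewrite -e has_ns.
exact: Astep_nohas hd' Hh (IH hd').
Qed.

Lemma span N : forall s (f : P2), I f -> (size f <= s)%N -> (s <= ns G + N)%N ->
  exists c : nat -> {poly K}, f = \sum_(k < N) (c k)%:P * Aseq G (ns G + k).
Proof.
case: (HI) => I0 ID IM.
elim => [|s IH] f If hs hN.
  move: hs; rewrite leqn0 size_poly_eq0 => /eqP ->; exists (fun _ => 0).
  by rewrite big1 // => k _; rewrite polyC0 mul0r.
case: (leqP (size f) s) => hfs; first by apply: IH => //; exact: ltnW.
have sf : size f = s.+1 by apply/anti_leq; rewrite hs hfs.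
have fnz : f != 0 by rewrite -size_poly_gt0 sf.
have [g gG] := (proj2 HG) f If fnz.
rewrite /mdiv /LM /= => /andP[h1 h2].
have [gnz _] := (proj1 HG) g gG.
have hns : (ns G <= s)%N by apply: leq_trans (ns_le gG) _; rewrite /degy; move: h2; rewrite sf.
have [IA sA mA] := invA hns.
set a := Aseq G s in IA sA mA *.
have lcA : lead_coef a != 0 by rewrite lead_coef_eq0 -size_poly_gt0 sA.
have lcf : lead_coef f != 0 by rewrite lead_coef_eq0.
set qx := lead_coef f %/ lead_coef a.
set f' := f - qx%:P * a.
have If' : I f'.
  have -> : f' = f + (-1) * (qx%:P * a) by rewrite /f'; ring.
  by apply: ID => //; apply IM; apply IM.
have cf' : f'`_s = lead_coef f %% lead_coef a.
  rewrite /f' coefB coefCM.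
  have -> : f`_s = lead_coef f by rewrite /lead_coef sf.
  have -> : a`_s = lead_coef a by rewrite /lead_coef sA.
  by rewrite {1}(divp_eq (lead_coef f) (lead_coef a)) addrC addKr.
have cf0 : f'`_s = 0.
  apply/eqP/negP => /negP rnz.
  have sf' : size f' = s.+1.
    apply: size_eqS => // k hk; rewrite /f' coefB coefCM.
    by rewrite !nth_default ?mulr0 ?subr0 // ?sf ?sA.
  have f'nz : f' != 0 by rewrite -size_poly_gt0 sf'.
  have [g' g'G] := (proj2 HG) f' If' f'nz.
  rewrite /mdiv /LM /= => /andP[h1' h2'].
  have [g'nz _] := (proj1 HG) g' g'G.
  have lg' : lead_coef g' != 0 by rewrite lead_coef_eq0.
  have := mA g' g'G; rewrite /degy.
  have : (size (lead_coef f') < size (lead_coef a))%N.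
    by rewrite /lead_coef sf' /= cf' ltn_modp.
  have : (0 < size (lead_coef g'))%N by rewrite size_poly_gt0.
  have : (0 < size (lead_coef f'))%N by rewrite size_poly_gt0 lead_coef_eq0.
  move: h1' h2'; rewrite sf' /=; lia.
have [c' Hc'] : exists c' : nat -> {poly K},
    f' = \sum_(k < N) (c' k)%:P * Aseq G (ns G + k).
  apply: IH => //; last exact: ltnW.
  apply/leq_sizeP => k; rewrite leq_eqVlt => /orP[/eqP <- //|hk].
  by rewrite /f' coefB coefCM !nth_default ?mulr0 ?subr0 // ?sf ?sA.
have hk0 : (s - ns G < N)%N by lia.
exists (fun k => c' k + (k == (s - ns G)%N)%:R * qx).
under eq_bigr do rewrite polyCD mulrDl.
rewrite big_split /= -Hc' (bigD1 (Ordinal hk0)) //= eqxx mul1r subnKC // -/a.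
rewrite big1 ?addr0; first by rewrite /f' subrK.
move=> k; rewrite -val_eqE /= => /negbTE ->; by rewrite mul0r polyC0 mul0r.
Qed.

Lemma indep N : forall c : nat -> {poly K},
  \sum_(k < N) (c k)%:P * Aseq G (ns G + k) = 0 -> forall k, (k < N)%N -> c k = 0.
Proof.
elim: N => [//|N IH] c hs k hk.
rewrite big_ord_recr /= in hs.
have [_ sN _] := invA (leq_addr N (ns G)).
have cN : c N = 0.
  have := congr1 (fun p : P2 => p`_(ns G + N)) hs; rewrite /= coefD coef_sum coefCM coef0.
  rewrite big1 ?add0r; last first.
    move=> i _; rewrite coefCM nth_default ?mulr0 //.
    have [_ -> _] := invA (leq_addr i (ns G)); have := ltn_ord i; lia.
  have : lead_coef (Aseq G (ns G + N)) != 0 by rewrite lead_coef_eq0 -size_poly_gt0 sN.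
  rewrite /lead_coef sN /= => nz /eqP; rewrite mulf_eq0 (negbTE nz) orbF => /eqP //.
move: hk; rewrite ltnS leq_eqVlt => /orP[/eqP -> //|hk].
apply: (IH c _ k hk); by move: hs; rewrite cN polyC0 mul0r addr0.
Qed.

End Proof.

Theorem lemma2 (K : fieldType) (I : {poly {poly K}} -> Prop) (G : seq {poly {poly K}}) :
  is_ideal I -> G != [::] -> groebner I G -> minimalGB G -> reducedGB G ->
  decreasingGB G ->
  forall n : nat, (ns G <= n)%N ->
    (forall k : 'I_(n - ns G + 1),
        I (Aseq G (ns G + k)) /\ (size (Aseq G (ns G + k)) <= n.+1)%N) /\
    (forall f, I f -> (size f <= n.+1)%N ->
        exists c : 'I_(n - ns G + 1) -> {poly K},
          f = \sum_(k < n - ns G + 1) (c k)%:P * Aseq G (ns G + k)) /\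
    (forall c : 'I_(n - ns G + 1) -> {poly K},
        \sum_(k < n - ns G + 1) (c k)%:P * Aseq G (ns G + k) = 0 ->
        forall k, c k = 0).
Proof.
move=> HI G0 HG Hmin _ Hdec n hn; split; [|split].
- move=> k; have [IA sA _] := invA HI HG Hmin G0 (leq_addr k (ns G)).
  split => //; rewrite sA; have := ltn_ord k; lia.
- move=> f If hf.
  have [c Hc] := @span K G I HI HG Hmin Hdec G0 (n - ns G + 1) n.+1 f If hf ltac:(lia).
  by exists (fun k => c k).
- move=> c hs k.
  pose c' := fun j : nat => odflt 0 (omap c (insub j : option 'I_(n - ns G + 1))).
  have hs' : \sum_(k < n - ns G + 1) (c' k)%:P * Aseq G (ns G + k) = 0.
    rewrite -[RHS]hs; apply: eq_bigr => i _; by rewrite /c' /= valK.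
  have := indep HI HG Hmin G0 hs' (ltn_ord k).
  by rewrite /c' valK.
Qed.
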